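(* Let $\mathcal{A}$ be a finite or countable alphabet, $\mathcal{M}$ a countable set of probability measures on $\mathcal{A}^\infty$, $w:\mathcal{M}\to(0,1]$ a prior with $\sum_\nu w_\nu=1$, and $\xi$ the Bayes mixture. Let $\nu\in\mathcal{M}$ and let $I$ be a stopping interval. Then $$\mathbb{E}_\nu\sum_{t\in I}d_t(\nu,\xi)\le\sum_{x\in\mathcal{A}(I)}\nu(x)\left(\ln\frac1{w_\nu}+\ln\frac{\xi(x)}{\nu(x)}\right).$$
   Context: $\mathcal{A}^\infty$ carries the filtration $\mathcal{F}_{<t}:=\sigma(\{\Gamma_x:x\in\mathcal{A}^{t-1}\})$, $\Gamma_x=\{x\omega:\omega\in\mathcal{A}^\infty\}$; for a measure $\rho$, $\rho(x):=\rho(\Gamma_x)$, $\rho(y|x):=\rho(xy)/\rho(x)$. Bayes mixture $\xi(A):=\sum_\nu w_\nu\nu(A)$. Natural logs. $d_t(\nu,\xi)(\omega):=\sum_a\nu(a|\omega_{<t})\ln\frac{\nu(a|\omega_{<t})}{\xi(a|\omega_{<t})}$ with $\omega_{<t}=\omega_1\cdots\omega_{t-1}$. A stopping time is $t:\mathcal{A}^\infty\to\mathbb{N}\cup\{\infty\}$ with $t^{-1}(n)$ $\mathcal{F}_{<n}$-measurable for all $n$; for it, $\mathcal{A}(t):=\{x\in\mathcal{A}^*: t(x\omega)=\ell(x)+1\ \forall\omega\}$, $\ell(x)$ the length of $x$. If $t\le t'$ are stopping times, $I(\omega):=[t(\omega),t'(\omega))$ is a stopping interval and $\mathcal{A}(I):=\mathcal{A}(t)$.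 Terms with $\nu(x)=0$ in the right-hand sum are taken to be $0$. *)

(* Defs.v *)
From HB Require Import structures.
From mathcomp Require Import all_boot all_order all_algebra.
From mathcomp Require Import all_classical all_reals all_analysis.
Set Implicit Arguments. Unset Strict Implicit. Unset Printing Implicit Defensive.
Import Order.TTheory GRing.Theory Num.Theory.
Local Open Scope classical_set_scope.
Local Open Scope ring_scope.

Section Seqspace.
Variable A : pointedType.

(* A^oo is represented by nat -> A; omega = omega_1 omega_2 ... with
   omega_k stored at index k-1. *)

(* prefix omega n = omega_1 ... omega_n ;  omega_{<t} = prefix omega (t-1) *)
Definition prefix (w : nat -> A) (n : nat) : seq A := mkseq w n.

Definition cyl (x : seq A) : set (nat -> A) := [set w | prefix w (size x) = x].

Definition catw (x : seq A) (w : nat -> A) : nat -> A :=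
  fun n => if (n < size x)%N then nth (w 0) x n else w (n - size x)%N.

Definition cylinders : set (set (nat -> A)) := [set cyl x | x in setT].

Definition F_lt (n : nat) : set (set (nat -> A)) :=
  <<s [set cyl x | x in [set x : seq A | size x = n.-1]] >>.

End Seqspace.

Definition seqspace (A : pointedType) := g_sigma_algebraType (@cylinders A).

(* extended naturals N u {oo}: None = oo *)
Definition leo (a b : option nat) : bool :=
  match a, b with
  | _, None => true
  | None, Some _ => false
  | Some m, Some n => (m <= n)%N
  end.
Definition lto (a b : option nat) : bool :=
  match a, b with
  | None, _ => false
  | Some _, None => true
  | Some m, Some n => (m < n)%N
  end.

Definition stopping_time (A : pointedType) (t : (nat -> A) -> option nat) : Prop :=
  (forall w, t w <> Some 0%N) /\
  (forall n : nat, @F_lt A n (t @^-1` [set Some n])).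

Definition stop_words (A : pointedType) (t : (nat -> A) -> option nat) : set (seq A) :=
  [set x | forall w, t (catw x w) = Some (size x).+1].

Section Sums.
Variable R : realType.
Local Open Scope ereal_scope.

Definition csum (T : choiceType) (D : set T) (f : T -> \bar R) : \bar R :=
  \esum_(i in D) (f^\+ i) - \esum_(i in D) (f^\- i).
End Sums.

Section Mixture.
Variables (A : pointedType) (R : realType).
Local Notation T := (seqspace A).

Definition mixture (M : set (probability T R)) (w : probability T R -> R)
  (S : set T) : \bar R :=
  (\esum_(mu in M) ((w mu)%:E * mu S))%E.

Definition cylm (rho : set T -> \bar R) (x : seq A) : R := fine (rho (cyl x)).

Definition condm (rho : set T -> \bar R) (y x : seq A) : R :=
  cylm rho (x ++ y) / cylm rho x.

Definition dKL (nu xi : set T -> \bar R) (t : nat) (om : nat -> A) : \bar R :=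
  let x := prefix om t.-1 in
  csum [set: A] (fun a => (condm nu [:: a] x * ln (condm nu [:: a] x / condm xi [:: a] x))%:E).

Definition sum_interval (nu xi : set T -> \bar R)
  (t t' : (nat -> A) -> option nat) (om : nat -> A) : \bar R :=
  csum [set s : nat | leo (t om) (Some s) && lto (Some s) (t' om)]
       (fun s => dKL nu xi s om).

End Mixture.

(* Main.v *)
Require Import Defs.
From HB Require Import structures.
From mathcomp Require Import all_boot all_order all_algebra.
From mathcomp Require Import all_classical all_reals all_analysis.
Import Order.TTheory GRing.Theory Num.Theory.
From mathcomp Require Import measurable_realfun zify ring lra.
From Stdlib Require Import Lia.
Require Import Defs.
Local Open Scope classical_set_scope.
Local Open Scope ring_scope.

Module Aux.
Set Implicit Arguments. Unset Strict Implicit. Unset Printing Implicit Defensive.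

Section esum_extra.
Local Open Scope ereal_scope.
Context {R : realType}.

Lemma esum_subset (T : choiceType) (I J : set T) (a : T -> \bar R) :
  I `<=` J -> (forall i, J i -> 0 <= a i) ->
  \esum_(i in I) a i <= \esum_(i in J) a i.
Proof.
move=> IJ a0; apply: ge_ereal_sup => _ [X [finX XI] <-].
apply: ereal_sup_ubound; exists X => //; split => //; exact: subset_trans XI IJ.
Qed.

Lemma esumZ (T : choiceType) (I : set T) (a : T -> \bar R) (c : R) :
  (0 <= c)%R -> (forall i, 0 <= a i) ->
  \esum_(i in I) (c%:E * a i) = c%:E * \esum_(i in I) a i.
Proof.
move=> c0 a0; rewrite /esum -ereal_supZl//; last first.
  by apply/set0P; exists 0; exists set0; [exact: fsets_set0|rewrite fsbig_set0].
congr ereal_sup; apply/seteqP; split => _ [X XI <-].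
  by exists (\sum_(x \in X) a x); [exists X|rewrite ge0_mule_fsumr].
by move: XI => [X' XI' <-]; exists X' => //; rewrite ge0_mule_fsumr.
Qed.

Lemma countable_enum (T : pointedType) (J : set T) : countable J ->
  exists (e : nat -> T) (P : set nat), set_bij P J e.
Proof.
move=> /countable_bijP[B /card_esym /card_set_bijP[f fb]].
by exists f, B.
Qed.

Lemma esum_series (T : choiceType) (P : set nat) (J : set T) (e : nat -> T)
    (a : T -> \bar R) : set_bij P J e -> (forall j, J j -> 0 <= a j) ->
  \esum_(j in J) a j = \sum_(n <oo) (if n \in P then a (e n) else 0).
Proof.
move=> eb a0; rewrite (reindex_esum P J e a)// -(set_mem_set P).
rewrite -nneseries_esum ?eseries_mkcond ?set_mem_set// => n.
rewrite inE => Pn.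
by apply: a0; case: eb => + _ _; apply.
Qed.

Lemma integral_esum d (T : measurableType d) (mu : measure T R)
   (U : pointedType) (J : set U) (h : U -> T -> \bar R) : countable J ->
  (forall j, J j -> measurable_fun [set: T] (h j)) ->
  (forall j x, J j -> 0 <= h j x) ->
  \int[mu]_x (\esum_(j in J) h j x) = \esum_(j in J) \int[mu]_x h j x.
Proof.
move=> /countable_enum[e [P eb]] mh h0.
have eJ n : n \in P -> J (e n) by rewrite inE; case: eb => + _ _; apply.
under eq_integral => x _ do rewrite (esum_series eb (fun j Jj => h0 j x Jj)).
rewrite integral_nneseries//; last 2 first.
- move=> n; case: (boolP (n \in P)) => [/eJ/mh//|_]; exact: measurable_cst.
- by move=> n x _; case: (boolP (n \in P)) => // /eJ Je; exact: h0.
rewrite (esum_series eb); last first.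
  by move=> j Jj; apply: integral_ge0 => x _; exact: h0.
apply: eq_eseriesr => n _; case: (boolP (n \in P)) => // _; exact: integral0.
Qed.

End esum_extra.

Section words.
Variable A : pointedType.
Implicit Types (x y z : seq A) (om : nat -> A).

Lemma size_pref om n : size (prefix om n) = n.
Proof. exact: size_mkseq. Qed.

Lemma prefix_catw x om : prefix (catw x om) (size x) = x.
Proof.
apply: (@eq_from_nth _ (om 0%N)); rewrite size_pref// => i Hi.
by rewrite nth_mkseq// /catw Hi.
Qed.

Lemma pref_take m n om : (m <= n)%N -> take m (prefix om n) = prefix om m.
Proof.
move=> mn; apply: (@eq_from_nth _ (om 0%N)).
  by rewrite size_take !size_pref; case: ifP => //; move: mn; lia.
move=> i; rewrite size_take size_pref => Hi.
have im : (i < m)%N by move: Hi; case: ifP => //; move: mn; lia.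
by rewrite nth_take// !nth_mkseq//; lia.
Qed.

Lemma prefix_cyl om n : cyl (prefix om n) om.
Proof. by rewrite /cyl/= size_pref. Qed.

Lemma prefS om n : prefix om n.+1 = prefix om n ++ [:: om n].
Proof. by rewrite /prefix mkseqS cats1. Qed.

Lemma cyl_rcons x a om : cyl (x ++ [:: a]) om <-> cyl x om /\ om (size x) = a.
Proof.
rewrite /cyl/= size_cat/= addn1 prefS; split.
  by move=> /eqP; rewrite eqseq_cat ?size_pref// => /andP[/eqP-> /eqP[->]].
by move=> [-> ->].
Qed.

Lemma mcyl x : measurable (cyl x : set (seqspace A)).
Proof. rewrite /measurable /=. apply: sub_gen_smallest. by exists x. Qed.

Lemma F_lt_sat n (S : set (nat -> A)) : F_lt n S ->
  forall om om', prefix om n.-1 = prefix om' n.-1 -> S om -> S om'.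
Proof.
move=> FS.
pose Sat := [set S : set (nat -> A) |
  forall om om', prefix om n.-1 = prefix om' n.-1 -> S om -> S om'].
suff : Sat S by [].
apply: (smallest_sub _ _ FS).
  split.
  - by move=> om om' _.
  - move=> B SB om om' e [_ nB]; split => // Bom'; apply: nB.
    exact: (SB om' om (esym e) Bom').
  - by move=> B SB om om' e [k _ Bk]; exists k => //; exact: (SB k om om' e).
by move=> _ [x /= xn <-] om om' e; rewrite /cyl/= xn => <-.
Qed.

End words.

Section measure_facts.
Variables (A : pointedType) (R : realType).
Hypothesis hA : countable [set: A].
Local Notation T := (seqspace A).
Local Open Scope ereal_scope.

Lemma cyl_add (mu : measure T R) z :
  mu (cyl z) = \esum_(a in [set: A]) mu (cyl (z ++ [:: a])).
Proof.
have [e [P eb]] := countable_enum hA.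
rewrite (esum_series eb)// -eseries_mkcond.
have -> : cyl z = \bigcup_(n in P) cyl (z ++ [:: e n]).
  apply/seteqP; split => om.
    move=> zom; have [n Pn en] := set_bij_surj eb (I : [set: A] (om (size z))).
    by exists n => //; apply/cyl_rcons.
  by move=> [n _ /cyl_rcons[]].
rewrite measure_bigcup//; first by move=> i _; exact: mcyl.
move=> i j Pi Pj [om [/cyl_rcons[_ ei] /cyl_rcons[_ ej]]].
by case: eb => _ + _; apply; rewrite ?inE//; exact: (etrans (esym ei) ej).
Qed.

End measure_facts.

HB.instance Definition _ (T0 : choiceType) := isPointed.Build (seq T0) [::].

Section mix.
Variables (A : pointedType) (R : realType).
Hypothesis hA : countable [set: A].
Local Notation T := (seqspace A).
Variable M : set (probability T R).
Variable w : probability T R -> R.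
Hypothesis hw : forall mu, M mu -> 0 < w mu <= 1.
Hypothesis hw1 : (\esum_(mu in M) (w mu)%:E = 1)%E.
Variable nu : probability T R.
Hypothesis hnu : M nu.
Local Notation xi := (mixture M w).

Local Open Scope ereal_scope.

Lemma w_ge0 mu : M mu -> (0 <= w mu)%R.
Proof. by move=> /hw /andP[/ltW]. Qed.

Lemma xi_ge0 S : 0 <= xi S.
Proof. by apply: esum_ge0 => mu Mmu; rewrite mule_ge0// lee_fin w_ge0. Qed.

Lemma xi_le1 S : measurable S -> xi S <= 1.
Proof.
move=> mS; rewrite -hw1; apply: le_esum => mu Mmu.
rewrite -[leRHS]mule1 lee_wpmul2l ?lee_fin ?w_ge0//; exact: probability_le1.
Qed.

Lemma xi_ge S : (w nu)%:E * nu S <= xi S.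
Proof.
apply: esum_ge; exists [set nu]; last by rewrite fsbig_set1.
by split; [exact: finite_set1|move=> ? ->].
Qed.

Lemma xi_add z : \esum_(a in [set: A]) xi (cyl (z ++ [:: a])) = xi (cyl z).
Proof.
rewrite /mixture.
transitivity (\esum_(k in [set: A] `*`` (fun=> M))
    ((w k.2)%:E * k.2 (cyl (z ++ [:: k.1])))).
  by rewrite esum_esum // => a mu _ Mmu; rewrite mule_ge0// lee_fin w_ge0.
rewrite (reindex_esum (M `*`` (fun=> [set: A])) _ (fun k => (k.2, k.1))); last first.
  split.
  - by move=> [mu a] [/= Mmu _].
  - by move=> [mu1 a1] [mu2 a2] _ _ /= [-> ->].
  - by move=> [a mu] [_ /= Mmu]; exists (mu, a).
rewrite /= -(@esum_esum _ _ _ M (fun=> [set: A]) (fun mu a => (w mu)%:E * mu (cyl (z ++ [:: a])))); last by move=> mu a Mmu _; rewrite mule_ge0// lee_fin w_ge0.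
apply: eq_esum => mu Mmu /=.
by rewrite esumZ ?w_ge0// -cyl_add.
Qed.

Definition p z := cylm nu z.
Definition q z := cylm xi z.

Lemma pE z : (p z)%:E = nu (cyl z).
Proof.
rewrite fineK// ge0_fin_numE//.
by rewrite (le_lt_trans (probability_le1 _ (mcyl z)))// ltey.
Qed.

Lemma qE z : (q z)%:E = xi (cyl z).
Proof.
rewrite fineK// ge0_fin_numE ?xi_ge0//.
by rewrite (le_lt_trans (xi_le1 (mcyl z)))// ltey.
Qed.

Lemma p_ge0 z : (0 <= p z)%R.
Proof. by rewrite -lee_fin pE. Qed.
Lemma q_ge0 z : (0 <= q z)%R.
Proof. by rewrite -lee_fin qE xi_ge0. Qed.
Lemma q_ge z : (w nu * p z <= q z)%R.
Proof. by rewrite -lee_fin EFinM pE qE xi_ge. Qed.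
Lemma p_add z : (p z)%:E = \esum_(a in [set: A]) (p (z ++ [:: a]))%:E.
Proof. by rewrite pE (cyl_add hA); apply: eq_esum => a _; rewrite pE. Qed.
Lemma q_add z : \esum_(a in [set: A]) (q (z ++ [:: a]))%:E = (q z)%:E.
Proof. by rewrite qE -xi_add; apply: eq_esum => a _; rewrite qE. Qed.
Lemma p_mono z a : (p (z ++ [:: a]) <= p z)%R.
Proof.
rewrite -lee_fin !pE le_measure ?inE//; try exact: mcyl.
by move=> om /cyl_rcons[].
Qed.


Local Close Scope ereal_scope.

Lemma wn_gt0 : 0 < w nu.
Proof. by have /andP[] := hw hnu. Qed.

Definition H z := ln (q z / (w nu * p z)).
Definition term z a :=
  condm nu [:: a] z * ln (condm nu [:: a] z / condm xi [:: a] z).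
Definition kk z := csum [set: A] (fun a => (term z a)%:E).

Lemma q_gt0 z : 0 < p z -> 0 < q z.
Proof. by move=> Pz; apply: lt_le_trans (q_ge z); rewrite mulr_gt0// wn_gt0. Qed.

Lemma H_ge0 z : 0 < p z -> 0 <= H z.
Proof.
move=> Pz; rewrite /H ln_ge0// ler_pdivlMr ?mulr_gt0 ?wn_gt0// mul1r; exact: q_ge.
Qed.

Lemma p_cases z : p z = 0 \/ 0 < p z.
Proof. by have := p_ge0 z; rewrite le_eqVlt => /orP[/eqP<-|]; [left|right]. Qed.

Lemma pH_ge0 z : 0 <= p z * H z.
Proof.
by case: (p_cases z) => [->|Pz]; rewrite ?mul0r// mulr_ge0 ?H_ge0// ltW.
Qed.

Lemma lnB (x y : R) : 0 < x -> 0 < y -> ln (x / y) = ln x - ln y.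
Proof. by move=> x0 y0; rewrite lnM ?posrE ?invr_gt0// lnV ?posrE. Qed.

Lemma ln_le_sub1 (u : R) : 0 < u -> ln u <= u - 1.
Proof. by move=> u0; have := expR_ge1Dx (ln u); rewrite lnK ?posrE//; lra. Qed.

Lemma term_eq z a : 0 < p z ->
  p z * term z a + p (z ++ [:: a]) * H (z ++ [:: a]) = p (z ++ [:: a]) * H z.
Proof.
move=> Pz; rewrite /term.
have -> : condm nu [:: a] z = p (z ++ [:: a]) / p z by [].
have -> : condm xi [:: a] z = q (z ++ [:: a]) / q z by [].
have Qz := q_gt0 Pz; have wn0 := wn_gt0.
case: (p_cases (z ++ [:: a])) => [->|Pa]; first by rewrite !mul0r mulr0 add0r.
have Qa := q_gt0 Pa; rewrite /H.
set P := p z; set Q := q z; set pa := p _; set qa := q _.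
have -> : pa / P / (qa / Q) = (Q / (w nu * P)) / (qa / (w nu * pa)).
  by field; rewrite !gt_eqF.
rewrite lnB ?divr_gt0 ?mulr_gt0//; field; exact: lt0r_neq0.
Qed.

Lemma jensen z a : 0 < p z ->
  p (z ++ [:: a]) * H (z ++ [:: a]) + p (z ++ [:: a]) <=
  p (z ++ [:: a]) * H z + p z / q z * q (z ++ [:: a]).
Proof.
move=> Pz; have Qz := q_gt0 Pz; have wn0 := wn_gt0.
case: (p_cases (z ++ [:: a])) => [->|Pa].
  by rewrite !mul0r !add0r mulr_ge0 ?divr_ge0 ?q_ge0 ?p_ge0.
have Qa := q_gt0 Pa; rewrite /H.
set P := p z; set Q := q z; set pa := p _; set qa := q _.
have u0 : 0 < qa * P / (pa * Q) by rewrite divr_gt0 ?mulr_gt0.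
have -> : qa / (w nu * pa) = Q / (w nu * P) * (qa * P / (pa * Q)).
  by field; rewrite !gt_eqF.
rewrite lnM ?posrE ?divr_gt0 ?mulr_gt0//.
have -> : P / Q * qa = pa * (qa * P / (pa * Q)) by field; rewrite !gt_eqF.
have := ln_le_sub1 u0; set u := qa * P / (pa * Q); set L := ln (Q / _).
move=> h; have h' : ln u + 1 <= u by lra.
rewrite mulrDr -addrA lerD2l -{2}(mulr1 pa) -mulrDr.
by rewrite ler_pM2l.
Qed.

Local Open Scope ereal_scope.

Lemma fin_of_le (x : \bar R) (c : R) : 0 <= x -> x <= c%:E -> x = (fine x)%:E.
Proof. by case: x. Qed.

Lemma fin_of_mulle (x : \bar R) (P c : R) : (0 < P)%R -> 0 <= x ->
  P%:E * x <= c%:E -> x = (fine x)%:E.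
Proof.
by case: x => // P0 _; rewrite gt0_muley ?lte_fin.
Qed.

Lemma node z : 0 <= kk z /\
  (p z)%:E * kk z + \esum_(a in [set: A]) (p (z ++ [:: a]) * H (z ++ [:: a]))%:E
  <= (p z * H z)%:E.
Proof.
case: (p_cases z) => [Pz|Pz].
  have k0 : kk z = 0.
    rewrite /kk /csum !esum1 ?subee// => a _.
      by rewrite funenegE /term /condm -/(p z) Pz invr0 !mulr0 mul0r oppe0 maxxx.
    by rewrite funeposE /term /condm -/(p z) Pz invr0 !mulr0 mul0r maxxx.
  rewrite k0 Pz mule0 add0e mul0r esum1// => a _.
  have := p_mono z a; rewrite Pz => h.
  have -> : p (z ++ [:: a]) = 0%R by apply/eqP; rewrite eq_le h p_ge0.
  by rewrite mul0r.
set f := fun a => (term z a)%:E.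
set Sp := \esum_(a in [set: A]) f^\+ a.
set Sn := \esum_(a in [set: A]) f^\- a.
set E := \esum_(a in [set: A]) (p (z ++ [:: a]) * H (z ++ [:: a]))%:E.
have Hz0 := H_ge0 Pz.
have Qz := q_gt0 Pz.
have pHa a : (0 <= p (z ++ [:: a]) * H (z ++ [:: a]))%R by exact: pH_ge0.
have I1 a : (p z)%:E * f^\+ a + (p (z ++ [:: a]) * H (z ++ [:: a]))%:E =
            (p (z ++ [:: a]) * H z)%:E + (p z)%:E * f^\- a.
  have te := term_eq a Pz.
  case: (leP 0%R (term z a)) => ht.
    have -> : f^\+ a = (term z a)%:E by rewrite funeposE max_l ?lee_fin.
    have -> : f^\- a = 0%:E by rewrite funenegE max_r ?lee_fin ?oppr_le0.
    by rewrite mule0 adde0 -!EFinM -EFinD te.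
  have -> : f^\+ a = 0%:E by rewrite funeposE max_r ?lee_fin ?ltW.
  have -> : f^\- a = (- term z a)%:E.
    by rewrite funenegE max_l ?lee_fin ?oppr_ge0 ?ltW.
  by rewrite mule0 add0e -!EFinM -EFinD; congr EFin; lra.
have I3 a : (p z)%:E * f^\- a <= (p (z ++ [:: a]) * H (z ++ [:: a]))%:E.
  have te := term_eq a Pz.
  case: (leP 0%R (term z a)) => ht.
    have -> : f^\- a = 0%:E by rewrite funenegE max_r ?lee_fin ?oppr_le0.
    by rewrite mule0 lee_fin.
  have -> : f^\- a = (- term z a)%:E.
    by rewrite funenegE max_l ?lee_fin ?oppr_ge0 ?ltW.
  rewrite -EFinM lee_fin.
  have : (0 <= p (z ++ [:: a]) * H z)%R by rewrite mulr_ge0// p_ge0.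
  lra.
have IV : (p z)%:E * Sp + E = (p z * H z)%:E + (p z)%:E * Sn.
  rewrite /Sp /Sn /E -!esumZ ?ltW// -!esumD//; last 2 first.
  - by move=> a _; rewrite mule_ge0// lee_fin ltW.
  - by move=> a _; rewrite lee_fin pH_ge0.
  rewrite (eq_esum (fun a _ => I1 a)) esumD; last 2 first.
  - by move=> a _; rewrite lee_fin mulr_ge0// p_ge0.
  - by move=> a _; rewrite mule_ge0// lee_fin ltW.
  congr (_ + _); rewrite mulrC EFinM p_add -esumZ//; last by move=> a; rewrite lee_fin p_ge0.
  by apply: eq_esum => a _; rewrite -EFinM mulrC.
have II : E <= (p z * H z)%:E.
  have h : \esum_(a in [set: A]) ((p (z ++ [:: a]) * H (z ++ [:: a]))%:E + (p (z ++ [:: a]))%:E)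
        <= \esum_(a in [set: A]) ((p (z ++ [:: a]) * H z)%:E + (p z / q z)%:E * (q (z ++ [:: a]))%:E).
    by apply: le_esum => a _; rewrite -EFinM -!EFinD lee_fin jensen.
  move: h; rewrite !esumD; last 4 first.
  - by move=> a _; rewrite lee_fin mulr_ge0// p_ge0.
  - by move=> a _; rewrite mule_ge0// lee_fin ?q_ge0// divr_ge0// ltW.
  - by move=> a _; rewrite lee_fin pH_ge0.
  - by move=> a _; rewrite lee_fin p_ge0.
  rewrite -/E -p_add esumZ ?q_add; last 2 first.
  - by rewrite divr_ge0// ltW.
  - by move=> a; rewrite lee_fin q_ge0.
  rewrite -EFinM divfK ?gt_eqF//.
  have -> : \esum_(a in [set: A]) (p (z ++ [:: a]) * H z)%:E = (p z * H z)%:E.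
    rewrite mulrC EFinM p_add -esumZ//; last by move=> a; rewrite lee_fin p_ge0.
    by apply: eq_esum => a _; rewrite -EFinM mulrC.
  by rewrite leeD2rE.
have III : (p z)%:E * Sn <= E.
  rewrite /Sn /E -esumZ; [|exact: ltW|exact: funeneg_ge0].
  by apply: le_esum => a _; exact: I3.
have E0 : 0 <= E by apply: esum_ge0 => a _; rewrite lee_fin.
have Sn0 : 0 <= Sn by apply: esum_ge0 => a _; exact: funeneg_ge0.
have Sp0 : 0 <= Sp by apply: esum_ge0 => a _; exact: funepos_ge0.
have EE := fin_of_le E0 II.
have SnE := fin_of_mulle Pz Sn0 (le_trans III II).
have SpE : Sp = (fine Sp)%:E.
  apply: (fin_of_mulle Pz Sp0 (c := p z * H z + p z * fine Sn)).
  by rewrite EFinD [X in _ <= _ + X]EFinM -SnE -IV leeDl.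
have kE : kk z = (fine Sp - fine Sn)%:E by rewrite /kk /csum -/f -/Sp -/Sn SpE SnE.
have IVr : (p z * fine Sp + fine E = p z * H z + p z * fine Sn)%R.
  by apply: EFin_inj; rewrite !EFinD !EFinM -SpE -SnE -EE.
have IIr : (fine E <= p z * H z)%R by rewrite -lee_fin -EE.
rewrite kE; split; first by rewrite lee_fin; nra.
rewrite EE (_ : (p z)%:E * (fine Sp - fine Sn)%:E = (p z * (fine Sp - fine Sn))%:E)//.
by rewrite -EFinD lee_fin; nra.
Qed.

Lemma kk_ge0 z : 0 <= kk z. Proof. by case: (node z). Qed.

Lemma pk_ge0 z : 0 <= (p z)%:E * kk z.
Proof. by rewrite mule_ge0 ?kk_ge0// lee_fin p_ge0. Qed.

Lemma esum_level (g : seq A -> \bar R) K : (forall z, 0 <= g z) ->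
  \esum_(y in [set y : seq A | size y = K.+1]) g y =
  \esum_(y in [set y : seq A | size y = K]) \esum_(a in [set: A]) g (y ++ [:: a]).
Proof.
move=> g0; rewrite (@esum_esum _ _ _ _ (fun=> [set: A]) (fun y a => g (y ++ [:: a])))//.
apply: reindex_esum; split.
- by move=> [y a] [/= yK _] /=; rewrite size_cat yK addn1.
- move=> [y1 a1] [y2 a2] _ _ /= /eqP; rewrite !cats1 eqseq_rcons.
  by move=> /andP[/eqP-> /eqP->].
- move=> y' /=; case/lastP: y' => [//|s a]; rewrite size_rcons => -[sK].
  by exists (s, a) => //=; rewrite cats1.
Qed.

Lemma level x K :
  \esum_(y in [set y : seq A | (size y < K)%N]) (p (x ++ y))%:E * kk (x ++ y) +
  \esum_(y in [set y : seq A | size y = K]) (p (x ++ y) * H (x ++ y))%:E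
  <= (p x * H x)%:E.
Proof.
elim: K => [|K IH].
  have -> : [set y : seq A | (size y < 0)%N] = set0 by apply/seteqP; split.
  have -> : [set y : seq A | size y = 0%N] = [set [::]].
    by apply/seteqP; split => y /=; [move/size0nil|move=> ->].
  by rewrite esum_set0 esum_set1 ?lee_fin ?pH_ge0// cats0 add0r.
rewrite (@esumID _ _ [set y : seq A | size y = K]); last by move=> y _; exact: pk_ge0.
have -> : [set y : seq A | (size y < K.+1)%N] `&` [set y | size y = K] =
          [set y | size y = K].
  by apply/seteqP; split => y /=; [case|move=> yK; split=> //; rewrite yK].
have -> : [set y : seq A | (size y < K.+1)%N] `&` ~` [set y | size y = K] =
          [set y | (size y < K)%N].
  apply/seteqP; split => y /=; first by case; rewrite ltnS leq_eqVlt => /orP[/eqP|].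
  by move=> yK; split; [exact: ltnW|move=> e; rewrite e ltnn in yK].
rewrite (@esum_level (fun y => (p (x ++ y) * H (x ++ y))%:E) K); last first.
  by move=> z; rewrite lee_fin pH_ge0.
rewrite [X in X + _ <= _]addeC -addeA -esumD; last 2 first.
- by move=> y _; exact: pk_ge0.
- by move=> y _; apply: esum_ge0 => a _; rewrite lee_fin pH_ge0.
apply: le_trans IH; apply: leeD2l; apply: le_esum => y _.
have [_ h] := node (x ++ y).
by under eq_esum => a _ do rewrite catA.
Qed.

Lemma xbound x :
  \esum_(y in [set: seq A]) (p (x ++ y))%:E * kk (x ++ y) <= (p x * H x)%:E.
Proof.
apply: ge_ereal_sup => _ [Y [finY _] <-].
pose K := (\max_(y <- finmap.enum_fset (fset_set Y)) size y).+1.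
apply: le_trans (level x K).
set S1 := \esum_(y in _) _; set S2 := \esum_(y in _) _.
apply: (@le_trans _ _ (S1 + 0)); last first.
  by apply: leeD2l; apply: esum_ge0 => y _; rewrite lee_fin pH_ge0.
rewrite adde0 /S1.
apply: esum_ge; exists Y => //; split => // y Yy /=.
by rewrite /K ltnS (leq_bigmax_seq y)// in_fset_set// inE.
Qed.

Lemma csum_ge0 (U : choiceType) (D : set U) (g : U -> \bar R) :
  (forall i, 0 <= g i) -> csum D g = \esum_(i in D) g i.
Proof.
move=> g0; rewrite /csum (@esum1 _ _ D (g^\-)) ?sube0.
  by apply: eq_esum => i _; rewrite funeposE max_l.
by move=> i _; rewrite funenegE max_r// oppe_le0.
Qed.

Lemma le_integral_nn d (T' : measurableType d) (mu : measure T' R)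
  (f g : T' -> \bar R) : (forall x, 0 <= f x) -> (forall x, f x <= g x) ->
  \int[mu]_x f x <= \int[mu]_x g x.
Proof.
move=> f0 fg; rewrite !ge0_integralE//; last by move=> x _; exact: le_trans (fg x).
rewrite !patch_setT; apply: ereal_sup_le => _ [h hf <-]; exists h => //.
by move=> x; apply: le_trans (hf x) (fg x).
Qed.

Lemma countable_seq (S : set (seq A)) : countable S.
Proof.
have /countable_injP[f finj] := hA.
apply/countable_injP; exists (fun s => pickle (map f s)) => s1 s2 _ _ /(pcan_inj pickleK).
elim: s1 s2 => [|a s1 IH] [|b s2] //= [fab /IH ->]//.
by rewrite (finj a b)// inE.
Qed.

Variables t t' : (nat -> A) -> option nat.
Hypothesis ht : stopping_time t.

Lemma stop_prefix om n : t om = Some n -> (0 < n)%N /\ stop_words t (prefix om n.-1).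
Proof.
move=> tn; have n0 : (0 < n)%N by case: n tn => // tn; case: ht => + _; move/(_ om).
split => // w0; rewrite size_pref prednK//.
have := F_lt_sat (ht.2 n) (om' := catw (prefix om n.-1) w0).
apply; last exact: tn.
by have := prefix_catw (prefix om n.-1) w0; rewrite size_pref => ->.
Qed.

Definition G (om : nat -> A) := \esum_(j in stop_words t `*`` (fun=> [set: seq A]))
  (kk (j.1 ++ j.2) * (\1_(cyl (j.1 ++ j.2)) om)%:E).

Lemma G_ge0 om : 0 <= G om.
Proof. by apply: esum_ge0 => j _; rewrite mule_ge0 ?kk_ge0// lee_fin indicE. Qed.

Lemma f_le_G om : sum_interval nu xi t t' om <= G om.
Proof.
rewrite /sum_interval csum_ge0; last by move=> s; exact: kk_ge0.
case tom : (t om) => [n|]; last first.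
  rewrite (_ : [set s | _] = set0) ?esum_set0 ?G_ge0//.
  by apply/seteqP; split => s //=.
have [n0 xS] := stop_prefix tom.
set I := [set s | _].
pose e s := (prefix om n.-1, drop n.-1 (prefix om s.-1)).
have In s : I s -> (n <= s)%N by rewrite /I/= => /andP[].
have eE s : I s -> (e s).1 ++ (e s).2 = prefix om s.-1.
  move=> Is; have ns := @In s Is; rewrite /= -(pref_take om (_ : n.-1 <= s.-1)%N) ?cat_take_drop//.
  by move: ns; lia.
have einj : set_inj I e.
  move=> s1 s2 /set_mem I1 /set_mem I2; have h1 := @In s1 I1; have h2 := @In s2 I2.
  move=> [] /(congr1 size); rewrite !size_drop !size_pref.
  by move: h1 h2 n0; lia.
apply: (@le_trans _ _ (\esum_(j in e @` I) (kk (j.1 ++ j.2) *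
                         (\1_(cyl (j.1 ++ j.2)) om)%:E))).
  rewrite esum_image//; apply: le_esum => s Is.
  rewrite eE// indicE mem_set; last exact: prefix_cyl.
  by rewrite /= mulr1n mule1.
rewrite /G; apply: esum_subset.
  by move=> _ [s Is <-]; split.
by move=> j _; rewrite mule_ge0 ?kk_ge0// lee_fin indicE.
Qed.



Lemma int_G : \int[nu]_om G om <= \esum_(x in stop_words t) (p x * H x)%:E.
Proof.
rewrite /G (@integral_esum _ _ _ nu _ (stop_words t `*`` (fun=> [set: seq A]))
  (fun j om => kk (j.1 ++ j.2) * (\1_(cyl (j.1 ++ j.2)) om)%:E)); last 3 first.
- exact: countableXR (countable_seq _) (fun _ _ => countable_seq _).
- move=> j _; apply: measurable_funeM; apply/measurable_EFinP.
  exact: measurable_indic (mcyl _).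
- by move=> j om _; rewrite mule_ge0 ?kk_ge0// lee_fin indicE.
rewrite -(@esum_esum _ _ _ (stop_words t) (fun=> [set: seq A])
  (fun x y => \int[nu]_om (kk (x ++ y) * (\1_(cyl (x ++ y)) om)%:E))); last first.
  by move=> x y _ _; apply: integral_ge0 => om _; rewrite mule_ge0 ?kk_ge0// lee_fin indicE.
apply: le_esum => x _; apply: le_trans (xbound x); rewrite le_eqVlt; apply/orP; left; apply/eqP.
apply: eq_esum => y _.
rewrite ge0_integralZl//; last 2 first.
- by apply/measurable_EFinP; exact: measurable_indic (mcyl _).
- exact: kk_ge0.
rewrite integral_indic; last exact: mcyl.
rewrite muleC pE; congr (_ * _); first by congr (nu _); exact: setIT.
exact: measurableT.
Qed.

Lemma rhs_eq x : (if cylm nu x == 0%R then 0 else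
   (cylm nu x * (ln (1 / w nu) + ln (cylm xi x / cylm nu x)))%:E) = (p x * H x)%:E.
Proof.
have -> : cylm nu x = p x by []. have -> : cylm xi x = q x by [].
case: (p_cases x) => [->|Px]; first by rewrite eqxx mul0r.
rewrite gt_eqF//; congr ((p x * _)%:E).
have Qx := q_gt0 Px; have wn0 := wn_gt0.
rewrite /H -lnM ?posrE ?divr_gt0//; congr ln; field.
by rewrite !gt_eqF.
Qed.

Lemma main_ineq : \int[nu]_om sum_interval nu xi t t' om <=
  csum (stop_words t) (fun x => if cylm nu x == 0%R then 0 else
   (cylm nu x * (ln (1 / w nu) + ln (cylm xi x / cylm nu x)))%:E).
Proof.
have f0 om : 0 <= sum_interval nu xi t t' om.
  rewrite /sum_interval csum_ge0 => [|s]; last exact: kk_ge0.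
  by apply: esum_ge0 => s _; exact: kk_ge0.
apply: le_trans (le_integral_nn nu f0 f_le_G) _.
apply: le_trans int_G _.
rewrite csum_ge0; last by move=> x; rewrite rhs_eq lee_fin pH_ge0.
by apply: le_esum => x _; rewrite rhs_eq.
Qed.

End mix.

End Aux.

Theorem lemma5 (A : pointedType) (R : realType)
  (hA : countable [set: A])
  (M : set (probability (seqspace A) R)) (hM : countable M)
  (w : probability (seqspace A) R -> R)
  (hw : forall mu, M mu -> 0 < w mu <= 1)
  (hw1 : (\esum_(mu in M) (w mu)%:E = 1)%E)
  (nu : probability (seqspace A) R) (hnu : M nu)
  (t t' : (nat -> A) -> option nat)
  (ht : stopping_time t) (ht' : stopping_time t')
  (htt' : forall om, leo (t om) (t' om)) :
  let xi := mixture M w in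
  (\int[nu]_om sum_interval nu xi t t' om <=
   csum (stop_words t)
     (fun x => if cylm nu x == 0%R then 0%E
               else (cylm nu x * (ln (1 / w nu) + ln (cylm xi x / cylm nu x)))%:E))%E.
Proof. exact: (Aux.main_ineq hA hw hw1 hnu t' ht). Qed.
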